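(* (1) Every PP-rich set in $(\mathbb{N},+)$ contains a family of $2^\omega$ almost disjoint subsets each of which is PP-rich. (2) Every PP-rich set in $(\mathbb{N},+)$ can be split into $\omega$ pairwise disjoint subsets each of which is PP-rich.
   Context: $\mathbb{N}=\{1,2,\dots\}$. $\mathbb{P}$ denotes the set of polynomials with coefficients in $\mathbb{N}\cup\{0\}$ and zero constant term which map $\mathbb{N}$ into $\mathbb{N}$; $\mathcal{P}_f(\mathbb{P})$ is the set of nonempty finite subsets of $\mathbb{P}$. $A\subseteq\mathbb{N}$ is PP-rich if for every $R\in\mathcal{P}_f(\mathbb{P})$ there exist $a,x\in\mathbb{N}$ with $\{a+f(x): f\in R\}\subseteq A$. For an infinite set $X$, a family of almost disjoint subsets of $X$ consists of subsets of $X$ of cardinality $|X|$ any two distinct of which meet in a set of cardinality less than $|X|$. *)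

(* Defs.v *)
From mathcomp Require Import all_boot all_algebra.
Set Implicit Arguments. Unset Strict Implicit. Unset Printing Implicit Defensive.
Local Open Scope ring_scope.

(* Subsets of nat are predicates nat -> Prop.  N = {1,2,...}. *)

Definition inPP (f : {poly nat}) : Prop :=
  f`_0 = 0%N /\ (forall x : nat, (0 < x)%N -> (0 < f.[x])%N).

Definition PP_rich (A : nat -> Prop) : Prop :=
  forall R : seq {poly nat}, R <> [::] -> (forall f, f \in R -> inPP f) ->
    exists a x : nat, (0 < a)%N /\ (0 < x)%N /\
      (forall f, f \in R -> A (a + f.[x])%N).

Definition subset_N (A : nat -> Prop) : Prop := forall n, A n -> (0 < n)%N.

Definition finite_nat (A : nat -> Prop) : Prop :=
  exists m : nat, forall n, A n -> (n < m)%N.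

(* Main.v *)
Require Import Defs.
From mathcomp Require Import all_boot all_algebra.
From Stdlib Require Import ClassicalEpsilon Classical FunctionalExtensionality.
Set Implicit Arguments. Unset Strict Implicit.

Definition valid (R : seq {poly nat}) :=
  R <> [::] /\ forall f, f \in R -> inPP f.

Lemma natr_mul (x m : nat) : (x *+ m)%R = (x * m)%N.
Proof. elim: m => [|m IH]; first by rewrite muln0. by rewrite GRing.mulrS IH mulnS. Qed.

Lemma validX : valid [:: 'X%R].
Proof.
split => // f; rewrite inE => /eqP ->; split.
  by rewrite coefX.
by move=> x hx; rewrite hornerX.
Qed.

Lemma shift_inPP (f : {poly nat}) m : inPP f -> inPP (f + 'X *+ m)%R.
Proof.
case=> h0 hp; split.
  by rewrite coefD coefMn coefX /= GRing.mul0rn GRing.addr0.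
move=> x hx; rewrite hornerD hornerMn hornerX natr_mul.
have := hp x hx; change (f.[x] + x * m)%R with (f.[x]%R + x * m)%N => h.
by apply: leq_trans h (leq_addr _ _).
Qed.

Lemma rich_big (A : nat -> Prop) m R : PP_rich A -> valid R ->
  exists a x, 0 < a /\ 0 < x /\
    forall f, f \in R -> A (a + f.[x])%R /\ m < a + f.[x]%R.
Proof.
move=> HA [Rn Rin].
have := HA [seq (f + 'X *+ m)%R | f <- R].
case.
- by case: R Rn {Rin}.
- by move=> g /mapP [f fR ->]; apply: shift_inPP; apply: Rin.
move=> a [x [ha [hx H]]].
exists (a + x * m), x; split; first by rewrite addn_gt0 ha.
split => // f fR.
have := H _ (map_f (fun f => (f + 'X *+ m)%R) fR).
rewrite hornerD hornerMn hornerX natr_mul.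
change (f.[x] + x * m)%R with (f.[x]%R + x * m)%N.
move=> HA'; have E : (a + x * m + f.[x]%R = a + (f.[x]%R + x * m))%N by rewrite addnA addnAC. 
have E' : ((a + x * m)%N + f.[x] = a + (f.[x] + (x * m)%N))%R := E.
rewrite E'; split => //.
have h1 : m <= x * m by rewrite leq_pmull.
apply: (@leq_trans (a + x * m)); first by rewrite -add1n leq_add.
exact: leq_addr.
Qed.

Definition spec (A : nat -> Prop) m R (p : nat * nat) :=
  valid R -> 0 < p.1 /\ 0 < p.2 /\
    forall f, f \in R -> A (p.1 + f.[p.2])%R /\ m < p.1 + f.[p.2]%R.

Lemma spec_ex A (HA : PP_rich A) m R : exists p, spec A m R p.
Proof.
case: (classic (valid R)) => hv.
  have [a [x [h1 [h2 h3]]]] := rich_big m HA hv.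
  by exists (a, x) => _.
by exists (0, 0) => /hv.
Qed.

Definition pick A HA m R : nat * nat :=
  proj1_sig (constructive_indefinite_description _ (@spec_ex A HA m R)).

Lemma pickP A HA m R : spec A m R (@pick A HA m R).
Proof. exact: proj2_sig (constructive_indefinite_description _ (@spec_ex A HA m R)). Qed.

Definition step A HA m R : seq nat :=
  let p := @pick A HA m R in [seq p.1 + f.[p.2]%R | f <- R].

Fixpoint Bnd (A : nat -> Prop) (HA : PP_rich A) (rho : nat -> seq {poly nat}) (t : nat -> nat) k : nat :=
  match k with
  | 0 => 0
  | k'.+1 => Bnd HA rho t k' + t k' + sumn (step HA (Bnd HA rho t k' + t k') (rho k'))
  end.

Definition Cb A HA rho t k := @step A HA (Bnd HA rho t k + t k) (rho k).

Lemma in_sumn (z : nat) s : z \in s -> z <= sumn s.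
Proof.
elim: s => //= y s IH; rewrite in_cons => /orP [/eqP -> | /IH h].
  exact: leq_addr.
exact: leq_trans h (leq_addl _ _).
Qed.

Section Gen.
Variables (A : nat -> Prop) (HA : PP_rich A) (rho : nat -> seq {poly nat}) (t : nat -> nat).
Hypothesis Hrho : forall k, valid (rho k).

Lemma Cb_prop k z : z \in Cb HA rho t k -> A z /\ Bnd HA rho t k + t k < z.
Proof.
rewrite /Cb /step => /mapP [f fR ->].
have [_ [_ H]] := pickP HA (Bnd HA rho t k + t k) (Hrho k).
exact: H.
Qed.

Lemma Cb_conf k : exists a x, 0 < a /\ 0 < x /\ forall f, f \in rho k -> (a + f.[x])%R \in Cb HA rho t k.
Proof.
have [h1 [h2 _]] := pickP HA (Bnd HA rho t k + t k) (Hrho k).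
exists (pick HA (Bnd HA rho t k + t k) (rho k)).1,
       (pick HA (Bnd HA rho t k + t k) (rho k)).2; do 2 split => //; move=> f fR.
rewrite /Cb /step; exact: (map_f (fun f => _ + f.[_]%R)).
Qed.

Lemma Cb_nonempty k : exists z, z \in Cb HA rho t k.
Proof.
have [a [x [_ [_ H]]]] := Cb_conf k.
case: (Hrho k) => hn _; case E: (rho k) hn => [//|f s] _.
exists (a + f.[x])%R; apply: H; by rewrite E inE eqxx.
Qed.

Lemma Bnd_mono j k : j <= k -> Bnd HA rho t j <= Bnd HA rho t k.
Proof.
elim: k => [|k IH]; first by rewrite leqn0 => /eqP ->.
rewrite leq_eqVlt => /orP [/eqP -> // | ].
rewrite ltnS => /IH h; apply: leq_trans h _ => /=.
by rewrite -addnA leq_addr.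
Qed.

Lemma Cb_lt j k y z : j < k -> y \in Cb HA rho t j -> z \in Cb HA rho t k -> y < z.
Proof.
move=> jk hy hz.
have [_ h2] := Cb_prop hz.
apply: leq_ltn_trans h2; apply: leq_trans (leq_addr _ _).
apply: leq_trans (Bnd_mono jk) => /=.
apply: leq_trans (in_sumn hy) _; exact: leq_addl.
Qed.

Lemma Cb_disj j k z : z \in Cb HA rho t j -> z \in Cb HA rho t k -> j = k.
Proof.
move=> hj hk; case: (ltngtP j k) => // h.
  by have := Cb_lt h hj hk; rewrite ltnn.
by have := Cb_lt h hk hj; rewrite ltnn.
Qed.

End Gen.

Definition enum_R (n : nat) : seq {poly nat} :=
  let R := map (@Poly nat) (odflt [::] (unpickle n : option (seq (seq nat)))) in
  if excluded_middle_informative (valid R) then R else [:: 'X%R].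

Lemma enum_valid n : valid (enum_R n).
Proof. rewrite /enum_R; destruct (excluded_middle_informative _) => //; exact: validX. Qed.

Lemma enum_surj R : valid R -> enum_R (pickle (map (fun p : {poly nat} => polyseq p) R)) = R.
Proof.
move=> hv; rewrite /enum_R pickleK /= (mapK (@polyseqK _)).
by destruct (excluded_middle_informative _).
Qed.

Fixpoint cum (f : nat -> nat) d := match d with 0 => f 0 | d'.+1 => cum f d' + f d end.

Lemma cum_ge f n d : n <= d -> f n <= cum f d.
Proof.
elim: d => [|d IH]; first by rewrite leqn0 => /eqP ->.
rewrite leq_eqVlt => /orP [/eqP -> /= | ]; first exact: leq_addl.
by rewrite ltnS => /IH h /=; apply: leq_trans h (leq_addr _ _).
Qed.

Theorem theorem5p7 :
  forall A : nat -> Prop, subset_N A -> PP_rich A ->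
  (* (1) a family of 2^omega (indexed injectively by nat -> bool)
         almost disjoint subsets of A, each PP-rich *)
  (exists F : (nat -> bool) -> (nat -> Prop),
      (forall i n, F i n -> A n) /\
      (forall i, ~ finite_nat (F i)) /\
      (forall i j, i <> j -> F i <> F j) /\
      (forall i j, i <> j -> finite_nat (fun n => F i n /\ F j n)) /\
      (forall i, PP_rich (F i)))
  /\
  (* (2) a splitting of A into omega pairwise disjoint PP-rich subsets *)
  (exists G : nat -> (nat -> Prop),
      (forall n, A n <-> exists k, G k n) /\
      (forall k l n, k <> l -> G k n -> G l n -> False) /\
      (forall k, PP_rich (G k))).
Proof.
move=> A _ HA; split.
- pose sz k := size (odflt [::] (unpickle k : option (seq bool))).
  pose rho k := enum_R (sz k).
  have Hrho : forall k, valid (rho k) by move=> k; exact: enum_valid.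
  pose C := Cb HA rho sz.
  pose pre (i : nat -> bool) n := mkseq i n.
  have szpre : forall i n, sz (pickle (pre i n)) = n.
    by move=> i n; rewrite /sz pickleK /= size_mkseq.
  pose F i z := exists n, z \in C (pickle (pre i n)).
  have Finf : forall i, ~ finite_nat (F i).
    move=> i [m Hm].
    have [z hz] := Cb_nonempty HA sz Hrho (pickle (pre i m)).
    have [_ h] := Cb_prop Hrho hz.
    have := Hm z (ex_intro _ m hz).
    rewrite szpre in h => h'.
    have h2 := leq_ltn_trans (leq_addl _ _) h.
    by have := ltn_trans h2 h'; rewrite ltnn.
  have Fad : forall i j, i <> j -> finite_nat (fun n => F i n /\ F j n).
    move=> i j hij.
    have [d hd] : exists d, i d <> j d.
      apply: NNPP => hn; apply: hij; apply: functional_extensionality => d.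
      by apply: NNPP => h; apply: hn; exists d.
    exists (cum (fun n => sumn (C (pickle (pre i n)))) d).+1.
    move=> z [[n hn] [n' hn']].
    have e1 := Cb_disj Hrho hn hn'.
    have e2 := pcan_inj (@pickleK _) e1.
    have en : n = n' by rewrite -(size_mkseq i n) -(size_mkseq j n'); congr size.
    subst n'.
    have nd : n <= d.
      rewrite leqNgt; apply/negP => dn; apply: hd.
      by rewrite -(nth_mkseq false i dn) -(nth_mkseq false j dn); congr (nth false _ d).
    rewrite ltnS; apply: leq_trans (in_sumn hn) _.
    exact: (cum_ge (fun n => sumn (C (pickle (pre i n))))).
  exists F; split; last split; last split; last split.
  + by move=> i z [n hn]; have [] := Cb_prop Hrho hn.
  + exact: Finf.
  + move=> i j hij E; apply: (Finf i); have := Fad i j hij.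
    rewrite -E; case=> m Hm; exists m => n hn; exact: Hm.
  + exact: Fad.
  + move=> i R Rn Rin.
    have hv : valid R by [].
    set m := pickle (map (fun p : {poly nat} => polyseq p) R).
    have er : rho (pickle (pre i m)) = R by rewrite /rho szpre enum_surj.
    have [a [x [ha [hx H]]]] := Cb_conf HA sz Hrho (pickle (pre i m)).
    exists a, x; do 2 split => //; move=> f fR; exists m; apply: H; by rewrite er.
- pose dec k := odflt (0, 0) (unpickle k : option (nat * nat)).
  pose rho k := enum_R (dec k).2.
  have Hrho : forall k, valid (rho k) by move=> k; exact: enum_valid.
  pose C := Cb HA rho (fun _ => 0).
  pose G l n := (exists k, (dec k).1 = l /\ n \in C k) \/
                (l = 0 /\ A n /\ ~ exists k, n \in C k).
  exists G; split; last split.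
  + move=> n; split.
      move=> hn; case: (classic (exists k, n \in C k)) => [[k hk] | hno].
        by exists (dec k).1; left; exists k.
      by exists 0; right.
    case=> l [[k [_ hk]] | [_ [h _]]] //.
    by have [] := Cb_prop Hrho hk.
  + move=> k l n kl [[k1 [e1 h1]] | [z1 [_ h1]]] [[k2 [e2 h2]] | [z2 [_ h2]]].
    * by apply: kl; rewrite -e1 -e2 (Cb_disj Hrho h1 h2).
    * by apply: h2; exists k1.
    * by apply: h1; exists k2.
    * by apply: kl; rewrite z1 z2.
  + move=> l R Rn Rin.
    have hv : valid R by [].
    set m := pickle (map (fun p : {poly nat} => polyseq p) R).
    have dk : dec (pickle (l, m)) = (l, m) by rewrite /dec pickleK.
    have er : rho (pickle (l, m)) = R by rewrite /rho dk enum_surj.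
    have [a [x [ha [hx H]]]] := Cb_conf HA (fun _ => 0) Hrho (pickle (l, m)).
    exists a, x; do 2 split => //; move=> f fR; left; exists (pickle (l, m)).
    by rewrite dk; split => //; apply: H; rewrite er.
Qed.
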